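(* Let $K$ be a field of characteristic zero, $0\ne c\in K$, $\phi$ the $K$-algebra endomorphism of $K[x]$ with $\phi(x)=x+c$, and $\delta=\mathrm{id}-\phi$. Let $a\in K$, $I$ the ideal of $K[x]$ generated by $x^2-ax$, and $\beta=a/c$. For $n\ge0$ set $D_n(t)=\frac{B_{n+1}(t)-B_{n+1}}{(n+1)t}$. Then for all $n\ge0$, $D_n(t)\in\mathbb{Q}[t]$ and $x^n\equiv D_n(\beta)c^n \pmod{\delta(I)}$.
   Context: $\mathrm{id}$ is the identity map of $K[x]$. The Bernoulli polynomials are defined by $\frac{ue^{tu}}{e^u-1}=\sum_{n\ge0}B_n(t)\frac{u^n}{n!}$, and $B_n=B_n(0)$ are the Bernoulli numbers. Congruence modulo the $K$-subspace $\delta(I)$ means the difference lies in $\delta(I)$. *)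

(* Defs.v *)
From HB Require Import structures.
From mathcomp Require Import all_boot all_order all_algebra.
Set Implicit Arguments. Unset Strict Implicit. Unset Printing Implicit Defensive.
Import Order.TTheory GRing.Theory Num.Theory.
Local Open Scope ring_scope.

(* Comparing coefficients of u^(m+1)/(m+1)!
   in  u e^{tu} = (e^u - 1) * sum_n B_n(t) u^n/n!  gives
     sum_{j=0}^{m} C(m+1,j) B_j(t) = (m+1) t^m,
   i.e.  B_m(t) = t^m - (1/(m+1)) sum_{j<m} C(m+1,j) B_j(t).
   bernp_upto m = [:: B_0; ...; B_m]. *)
Fixpoint bernp_upto (m : nat) : seq {poly rat} :=
  match m with
  | 0 => [:: 1]
  | m'.+1 =>
      let s := bernp_upto m' in
      rcons s ('X^(m'.+1) -
               ((m'.+2)%:R)^-1 *: \sum_(j < m'.+1) ('C(m'.+2, j)%:R *: s`_j))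
  end.

Definition bernp (m : nat) : {poly rat} := nth 0 (bernp_upto m) m.

Definition bernn (m : nat) : rat := (bernp m).[0].

Definition Dpoly (n : nat) : {poly rat} :=
  (bernp n.+1 - (bernn n.+1)%:P) %/ ((n.+1)%:R *: 'X).

Definition phi (K : fieldType) (c : K) (p : {poly K}) : {poly K} :=
  p \Po ('X + c%:P).

Definition delta (K : fieldType) (c : K) (p : {poly K}) : {poly K} :=
  p - phi c p.

(* Main.v *)
Require Import Defs.
From HB Require Import structures.
From mathcomp Require Import all_boot all_order all_algebra.
From mathcomp Require Import ring.
Import Order.TTheory GRing.Theory Num.Theory.
Local Open Scope ring_scope.

Lemma bernp_upto_size m : size (bernp_upto m) = m.+1.
Proof. by elim: m => [|m IH] //=; rewrite size_rcons IH. Qed.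

Lemma bernp_upto_nth m j : (j <= m)%N -> (bernp_upto m)`_j = bernp j.
Proof.
elim: m => [|m IH]; first by rewrite leqn0 => /eqP ->.
rewrite leq_eqVlt => /orP[/eqP -> //|hj].
by rewrite /= nth_rcons bernp_upto_size hj IH.
Qed.

Lemma bernp_rec m : bernp m.+1 = 'X^(m.+1) -
  ((m.+2)%:R)^-1 *: \sum_(j < m.+1) ('C(m.+2, j)%:R *: bernp j).
Proof.
rewrite {1}/bernp /= nth_rcons bernp_upto_size ltnn eqxx.
congr (_ - _ *: _); apply: eq_bigr => j _.
by rewrite bernp_upto_nth // -ltnS.
Qed.

Lemma bernp0 : bernp 0 = 1.
Proof. by []. Qed.

Lemma comp_sum (R : comNzRingType) (k : nat) (F : 'I_k -> {poly R}) q :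
  (\sum_(j < k) F j) \Po q = \sum_(j < k) (F j \Po q).
Proof. exact: (big_morph (fun p => p \Po q) (fun p r => comp_polyD p r q) (comp_poly0 q)). Qed.

Lemma comp_Xn (R : comNzRingType) (k : nat) (q : {poly R}) : 'X^k \Po q = q ^+ k.
Proof.
elim: k => [|k IH]; first by rewrite expr0 -polyC1 comp_polyC.
by rewrite !exprS comp_polyM comp_polyX IH.
Qed.

Lemma bern_diff m : bernp m \Po ('X + 1) - bernp m = 'X^(m.-1) *+ m.
Proof.
elim/ltn_ind: m => -[|m] IH.
  by rewrite bernp0 -polyC1 comp_polyC subrr mulr0n.
rewrite bernp_rec comp_polyB comp_polyZ comp_sum comp_Xn.
have hS : \sum_(j < m.+1) ('C(m.+2, j)%:R *: bernp j \Po ('X + 1))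
   = \sum_(j < m.+1) ('C(m.+2, j)%:R *: bernp j)
     + \sum_(j < m.+1) 'X^(j.-1) *+ ('C(m.+2, j) * j).
  rewrite -big_split /=; apply: eq_bigr => j _.
  rewrite comp_polyZ -[bernp j \Po _](subrK (bernp j)) IH // mulrnA scaler_nat.
  by rewrite scaler_nat mulrnDl addrC mulrnAC.
have hT : \sum_(j < m.+1) 'X^(j.-1) *+ ('C(m.+2, j) * j)
   = (m.+2)%:R *: \sum_(i < m) 'X^i *+ 'C(m.+1, i) :> {poly rat}.
  rewrite big_ord_recl /= muln0 mulr0n add0r scaler_sumr; apply: eq_bigr => i _.
  rewrite scaler_nat -mulrnA add0n /bump leq0n add1n; congr (_ *+ _).
  by rewrite mulnC (mulnC _ m.+2) (mul_bin_diag m.+2 i).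
rewrite hS hT scalerDr scalerA mulVf ?pnatr_eq0 // scale1r exprD1n.
rewrite big_ord_recr big_ord_recr /= binSn binn mulr1n /=.
move: (\sum_(i < m) _) (m.+2%:R^-1 *: _) ('X^m *+ m.+1) ('X^(m.+1)) => A B C E.
ring.
Qed.


Lemma dvd_part n : ((n.+1)%:R *: 'X) %| (bernp n.+1 - (bernn n.+1)%:P).
Proof.
rewrite dvdpZl ?pnatr_eq0 //.
have: root (bernp n.+1 - (bernn n.+1)%:P) 0 by rewrite /root !hornerE /bernn subrr.
move/factor_theorem => [q ->]; rewrite subr0.
exact: dvdp_mull (dvdpp _).
Qed.

Lemma H_diff n : ('X * Dpoly n) \Po ('X + 1) - 'X * Dpoly n = 'X^n.
Proof.
have hd := divpK (dvd_part n); rewrite -/(Dpoly n) in hd.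
have hn : (n.+1)%:R != 0 :> rat by rewrite pnatr_eq0.
apply: (scalerI hn).
rewrite scalerBr -comp_polyZ scalerAl -mulrC hd comp_polyB comp_polyC.
rewrite opprB addrA subrK bern_diff /= scaler_nat //.
Qed.

Lemma key (K : fieldType) (c a : K) (hc : c != 0) n (D : {poly K})
  (hD : ('X * D) \Po ('X + 1) - 'X * D = 'X^n) :
  exists q, 'X^n - (D.[a / c] * c ^+ n)%:P = delta c (q * ('X^2 - a *: 'X)).
Proof.
set u := c^-1; set b := D.[a / c].
have [E hE] : exists E, b%:P - D = E * ('X - (a / c)%:P).
  by apply/factor_theorem; rewrite /root !hornerE subrr.
have hT1 : (u%:P * 'X) \Po ('X + c%:P) = u%:P * 'X + 1.
  by rewrite comp_polyM comp_polyC comp_polyX mulrDr -polyCM mulVf.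
have hT2 : ('X + 1) \Po (u%:P * 'X) = u%:P * 'X + 1.
  by rewrite comp_polyD comp_polyX -polyC1 comp_polyC.
have hD' : (u%:P * 'X + 1) * ((D \Po ('X + 1)) \Po (u%:P * 'X))
     - u%:P * 'X * (D \Po (u%:P * 'X)) = (u%:P * 'X) ^+ n.
  have := congr1 (fun p => p \Po (u%:P * 'X)) hD => /=.
  by rewrite comp_polyB !comp_polyM comp_polyX comp_Xn hT2 comp_polyX.
exists ((c ^+ n * u ^+ 2)%:P * (E \Po (u%:P * 'X))).
have hq : (c ^+ n * u ^+ 2)%:P * (E \Po (u%:P * 'X)) * ('X^2 - a *: 'X)
   = (c ^+ n)%:P * (u%:P * 'X * (b%:P - (D \Po (u%:P * 'X)))).
  have -> : b%:P - (D \Po (u%:P * 'X)) = (E \Po (u%:P * 'X)) * (u%:P * 'X - (a / c)%:P).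
    by rewrite -[b%:P](comp_polyC b (u%:P * 'X)) -comp_polyB hE comp_polyM comp_polyB comp_polyX comp_polyC.
  rewrite -mul_polyC polyCM !polyC_exp polyCM -/u; ring.
rewrite hq /delta /phi comp_polyM comp_polyC comp_polyM hT1 comp_polyB comp_polyC.
rewrite -comp_polyA hT1 polyCM.
rewrite -comp_polyA hT2 in hD'.
apply/eqP; rewrite -subr_eq0; apply/eqP.
set A := D \Po (u%:P * 'X) in hD' *; set B' := D \Po (u%:P * 'X + 1) in hD' *.
transitivity (-((c ^+ n)%:P * ((u%:P * 'X + 1) * B' - u%:P * 'X * A - (u%:P ^+ n * 'X^n)))
   - ((c ^+ n)%:P * (u%:P) ^+ n - 1) * 'X^n : {poly K}); first by clearbody A B'; ring.
rewrite -exprMn hD' subrr mulr0 oppr0 sub0r -polyC_exp -polyCM -exprMn mulfV // expr1n subrr mul0r.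
by rewrite oppr0.
Qed.

Section Ratr.
Variable K : fieldType.
Hypothesis hK : [pchar K] =i pred0.

Let nz_den x : (denq x)%:~R != 0 :> K.
Proof.
have := denq_gt0 x; case: (denq x) => // m hm.
by rewrite -pmulrn ((pcharf0P K).1 hK) -lt0n.
Qed.

Lemma ratrK_zmod : zmod_morphism (@ratr K).
Proof.
have injZtoQ: @injective rat int intr by apply: intr_inj.
move=> x y.
apply: (canLR (mulfK (nz_den _))); apply: (mulIf (nz_den x)).
rewrite mulrAC mulrBl divfK ?nz_den // mulrAC -!rmorphM.
apply: (mulIf (nz_den y)); rewrite mulrAC mulrBl divfK ?nz_den //.
rewrite -!(rmorphM, rmorphB); congr _%:~R; apply: injZtoQ.
rewrite !(rmorphM, rmorphB) /= [_ - _]lock /= -lock !numqE.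
by rewrite (mulrAC y) -!mulrBl -mulrA mulrAC !mulrA.
Qed.

Lemma ratrK_monoid : monoid_morphism (@ratr K).
Proof.
have injZtoQ: @injective rat int intr by apply: intr_inj.
split=> [|x y]; first by rewrite /ratr divr1.
rewrite /ratr mulrC mulrAC; apply: canLR (mulKf (nz_den _)) _; rewrite !mulrA.
do 2!apply: canRL (mulfK (nz_den _)) _; rewrite -!rmorphM; congr _%:~R.
apply: injZtoQ; rewrite !rmorphM [x * y]lock /= !numqE -lock.
by rewrite -!mulrA mulrA mulrCA -!mulrA (mulrCA y).
Qed.
End Ratr.

Theorem lemma4p5 (K : fieldType) (hK : [pchar K] =i pred0) (c a : K)
  (hc : c != 0) (n : nat) :
  (((n.+1)%:R *: 'X) %| (bernp n.+1 - (bernn n.+1)%:P)) /\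
  exists q : {poly K},
    'X^n - ((map_poly ratr (Dpoly n)).[a / c] * c ^+ n)%:P
      = delta c (q * ('X^2 - a *: 'X)).
Proof.
split; first exact: dvd_part.
pose f : {rmorphism rat -> K} := HB.pack (@ratr K)
  (GRing.isZmodMorphism.Build _ _ _ (@ratrK_zmod K hK))
  (GRing.isMonoidMorphism.Build _ _ _ (@ratrK_monoid K hK)).
have hD : ('X * map_poly f (Dpoly n)) \Po ('X + 1) - 'X * map_poly f (Dpoly n) = 'X^n.
  have := congr1 (map_poly f) (H_diff n).
  rewrite rmorphB /= -[@ratr K]/(GRing.RMorphism.sort f).
  rewrite (map_comp_poly f) !rmorphM rmorphD /= -[@ratr K]/(GRing.RMorphism.sort f).
  by rewrite !(map_polyX f) (map_polyXn f) rmorph1.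
exact: (@key K c a hc n _ hD).
Qed.
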